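(* Let $S$ and $T$ be disjoint nonempty finite sets, and suppose $L=M\mathbin{\Box} N=P\mathbin{\Box} Q$, where $M$ is a matroid on $S$, $N$ a matroid on $T$, $P$ a matroid on $T$ and $Q$ a matroid on $S$. Then $L$ is a uniform matroid.
   Context: For a matroid $M$ on $S$ write $\rho_M$ for rank, $\rho(M)=\rho_M(S)$, $\nu_M(A)=|A|-\rho_M(A)$, $\lambda_M(A)=\rho(M)-\rho_M(A)$. For matroids $M$ on $S$ and $N$ on $T$ with $S\cap T=\emptyset$, the free product $M\mathbin{\Box} N$ is the matroid on $S\cup T$ whose independent sets are those $A$ with $A\cap S$ independent in $M$ and $\lambda_M(A\cap S)\geq\nu_N(A\cap T)$. *)

(* Defs.v *)
From mathcomp Require Import all_boot.
Set Implicit Arguments. Unset Strict Implicit. Unset Printing Implicit Defensive.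

Section Matroid.
Variable E : finType.

Definition is_matroid (X : {set E}) (I : {set {set E}}) : Prop :=
  [/\ (forall A : {set E}, A \in I -> A \subset X),
      set0 \in I,
      (forall A B : {set E}, B \in I -> A \subset B -> A \in I) &
      (forall A B : {set E}, A \in I -> B \in I -> #|A| < #|B| ->
         exists2 x, x \in B :\: A & x |: A \in I)].

Definition mrank (I : {set {set E}}) (A : {set E}) : nat :=
  \max_(B in I | B \subset A) #|B|.

Definition nullity (I : {set {set E}}) (A : {set E}) : nat := #|A| - mrank I A.

Definition corank (X : {set E}) (I : {set {set E}}) (A : {set E}) : nat :=
  mrank I X - mrank I A.

Definition free_product (S : {set E}) (M : {set {set E}})
    (T : {set E}) (N : {set {set E}}) : {set {set E}} :=
  [set A : {set E} | [&& A \subset S :|: T, A :&: S \in M &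
                        nullity N (A :&: T) <= corank S M (A :&: S)]].

Definition is_uniform (X : {set E}) (I : {set {set E}}) : Prop :=
  exists r : nat, forall A : {set E}, (A \in I) = (A \subset X) && (#|A| <= r).

End Matroid.

(* Main.v *)
Require Import Defs.
From mathcomp Require Import all_boot zify.
Set Implicit Arguments. Unset Strict Implicit. Unset Printing Implicit Defensive.

Section Gen.
Variable E : finType.
Implicit Types (A B X Y : {set E}) (I : {set {set E}}).

Lemma mrank_ge I A B : B \in I -> B \subset A -> #|B| <= mrank I A.
Proof. by move=> HB HBA; rewrite /mrank (leq_bigmax_cond B) // HB HBA. Qed.

Lemma mrank_le_card I A : mrank I A <= #|A|.
Proof. by apply/bigmax_leqP => B /andP[_ /subset_leq_card]. Qed.

Lemma mrank_mono I A B : A \subset B -> mrank I A <= mrank I B.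
Proof.
move=> AB; apply/bigmax_leqP => C /andP[CI CA].
by apply: mrank_ge => //; apply: subset_trans AB.
Qed.

Lemma mrank_indep I A : A \in I -> mrank I A = #|A|.
Proof. by move=> HA; apply/eqP; rewrite eqn_leq mrank_le_card mrank_ge. Qed.

Lemma mrank_wit I A : set0 \in I -> exists B, [/\ B \in I, B \subset A & #|B| = mrank I A].
Proof.
move=> H0.
have : 0 < #|[pred B : {set E} | (B \in I) && (B \subset A)]|.
  by apply/card_gt0P; exists set0; rewrite inE H0 sub0set.
move/(eq_bigmax_cond (fun B : {set E} => #|B|)) => [B0].
rewrite inE => /andP[H1 H2] H3; exists B0; split => //.

Qed.

Lemma extend_sub B : forall d (J : {set E}), J \subset B -> #|J| + d <= #|B| ->
  exists Y : {set E}, [/\ J \subset Y, Y \subset B & #|Y| = #|J| + d].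
Proof.
elim=> [|d IH] J JB Hc; first by exists J; rewrite addn0.
have : 0 < #|B :\: J| by rewrite cardsD (setIidPr JB); lia.
move/card_gt0P => [x]; rewrite inE => /andP[xJ xB].
have HI' : #|x |: J| = #|J|.+1 by rewrite cardsU1 xJ.
have [||Y [h1 h2 h3]] := IH (x |: J).
- by rewrite subUset sub1set xB JB.
- lia.
exists Y; split => //; last by lia.
by apply: subset_trans h1; apply: subsetUr.
Qed.

Lemma card_split (S T A : {set E}) : [disjoint S & T] -> A \subset S :|: T ->
  #|A| = #|A :&: S| + #|A :&: T|.
Proof.
move=> dST AST.
have e : A :&: S :|: A :&: T = A by rewrite -setIUr; apply/setIidPl.
have e0 : (A :&: S) :&: (A :&: T) = set0.
  by rewrite setIACA (disjoint_setI0 dST) setI0.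
by rewrite -{1}e -cardsUI e0 cards0 addn0.
Qed.

Section FP.
Variables (S T : {set E}) (M N : {set {set E}}).
Hypotheses (dST : [disjoint S & T]) (HM : is_matroid S M) (HN : is_matroid T N).
Let F := free_product S M T N.
Let rM := mrank M S.
Let rN := mrank N T.

Lemma indep_le A : A \in M -> #|A| <= rM.
Proof.
case: HM => sub _ _ _ HA; rewrite -(mrank_indep HA); exact: mrank_mono (sub _ HA).
Qed.

Lemma FP_inv A : A \in F ->
  [/\ A \subset S :|: T, A :&: S \in M & #|A| <= rM + mrank N (A :&: T)].
Proof.
rewrite inE => /and3P[h1 h2 h3]; split => //.
move: h3; rewrite /nullity /corank (mrank_indep h2) (card_split dST h1).
have := indep_le h2; have := mrank_le_card N (A :&: T); rewrite -/rM; lia.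
Qed.

Lemma FP_le A : A \in F -> #|A| <= rM + rN.
Proof.
case/FP_inv => _ _ h; apply: leq_trans h _; rewrite leq_add2l.
apply: mrank_mono; exact: subsetIr.
Qed.

Lemma FP_fill X k : X \in M -> k <= #|T| -> #|X| + k <= rM + rN ->
  exists A, [/\ A \in F, A :&: S = X & #|A| = #|X| + k].
Proof.
move=> XM kT Hk.
case: (HN) => subN N0 _ _.
case: (mrank_wit T N0) => BN [BNi BNT BNc].
have [|Ii [_ Isub Ic]] := extend_sub (d:=minn k rN) (sub0set BN).
  by rewrite cards0 add0n BNc; apply: geq_minr.
rewrite cards0 add0n in Ic.
have IT : Ii \subset T := subset_trans Isub BNT.
have [|Y [IY YT Yc]] := extend_sub (d:=k - minn k rN) IT.
  by rewrite Ic; lia.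
rewrite Ic in Yc.
case: (HM) => subM _ _ _.
have XS := subM _ XM.
have dXT : [disjoint X & T] := disjointWl XS dST.
have dYS : [disjoint Y & S] by rewrite disjoint_sym; exact: disjointWr YT dST.
have e1 : (X :|: Y) :&: S = X.
  by rewrite setIUl (setIidPl XS) (disjoint_setI0 dYS) setU0.
have e2 : (X :|: Y) :&: T = Y.
  by rewrite setIUl (setIidPl YT) (disjoint_setI0 dXT) set0U.
have cXY : #|X :|: Y| = #|X| + #|Y|.
  by rewrite -cardsUI (disjoint_setI0 (disjointWr YT dXT)) cards0 addn0.
exists (X :|: Y); split => //; last by rewrite cXY; lia.
rewrite inE e1 e2 XM /= setUSS //.
have hI : #|Ii| <= mrank N Y.
  apply: mrank_ge IY; case: HN => _ _ hc _; exact: hc _ _ BNi Isub.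
rewrite /nullity /corank (mrank_indep XM) -/rM.
have := indep_le XM; rewrite Ic in hI; lia.
Qed.

Lemma FP_conclude A A' : A \subset S :|: T -> A :&: S \in M -> A' \in F ->
  A' :&: T \subset A :&: T -> #|A| <= #|A'| -> A \in F.
Proof.
move=> AST ASM /FP_inv [_ _ h] sub hc.
have hm := mrank_mono N sub.
rewrite inE AST ASM /= /nullity /corank (mrank_indep ASM) -/rM.
have := indep_le ASM; have := card_split dST AST; lia.
Qed.

End FP.

Lemma side (S T : {set E}) (M N P Q : {set {set E}}) :
  [disjoint S & T] -> S != set0 ->
  is_matroid S M -> is_matroid T N -> is_matroid T P -> is_matroid S Q ->
  free_product S M T N = free_product T P S Q ->
  forall A, (forall B, #|B| < #|A| -> B \subset S :|: T ->
               #|B| <= mrank P T + mrank Q S -> B \in free_product S M T N) ->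
  A \subset S :|: T -> #|A| <= mrank P T + mrank Q S -> A :&: T \notin P ->
  A \in free_product S M T N.
Proof.
move=> dST S0 HM HN HP HQ eqF A IH AST hr AT.
have dTS : [disjoint T & S] by rewrite disjoint_sym.
have AS0 : A :&: S = set0.
  apply/eqP; apply: contraR AT => /set0Pn [x xAS].
  have hlt : #|A :&: T| < #|A|.
    rewrite (card_split dST AST); have : 0 < #|A :&: S| by apply/card_gt0P; exists x.
    lia.
  have := IH _ hlt (subset_trans (subsetIl A T) AST) (leq_trans (ltnW hlt) hr).
  rewrite eqF => /(FP_inv dTS HP) [_ h _].
  by rewrite -setIA setIid in h.
have AT' : A \subset T.
  apply/subsetP => x xA; move/subsetP: AST => /(_ x xA); rewrite inE => /orP[xS|//].
  have : x \in A :&: S by rewrite inE xA xS.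
  by rewrite AS0 inE.
have eAT : A :&: T = A by apply/setIidPl.
case: (HP) => _ P0 _ _.
have [a aA] : exists a, a \in A.
  apply/set0Pn; apply: contraNneq AT => ->; by rewrite set0I.
set X := A :\ a.
have cX : #|A| = #|X|.+1 by rewrite (cardsD1 a A) aA.
have XT : X \subset T := subset_trans (subsetDl A _) AT'.
have XF : X \in free_product S M T N.
  apply: IH; first by rewrite cX.
  - exact: subset_trans (subsetDl A _) AST.
  - by rewrite cX in hr; lia.
rewrite eqF in XF; case: (FP_inv dTS HP XF) => _ XP _.
rewrite (setIidPl XT) in XP.
have S1 : 0 < #|S| by rewrite card_gt0.
have hk : #|X| + 1 <= mrank P T + mrank Q S by rewrite addn1 -cX.
have [A' [A'F A'T A'c]] := FP_fill dTS HP HQ XP S1 hk.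
have : A' \in free_product S M T N by rewrite eqF.
move=> A'F'.
apply: (@FP_conclude S T M N dST HM A A') => //.
- by rewrite AS0; case: HM.
- by rewrite A'T eAT subsetDl.
- by rewrite A'c cX addn1.
Qed.
 
End Gen.

Theorem corollary6p6 (E : finType) (S T : {set E})
    (M N P Q : {set {set E}}) :
  [disjoint S & T] -> S != set0 -> T != set0 ->
  is_matroid S M -> is_matroid T N -> is_matroid T P -> is_matroid S Q ->
  free_product S M T N = free_product T P S Q ->
  is_uniform (S :|: T) (free_product S M T N).
Proof.
move=> dST S0 T0 HM HN HP HQ eqF.
have dTS : [disjoint T & S] by rewrite disjoint_sym.
have rk : mrank M S + mrank N T = mrank P T + mrank Q S.
  have base : forall (S T : {set E}) (M N P Q : {set {set E}}),
      [disjoint S & T] -> [disjoint T & S] ->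
      is_matroid S M -> is_matroid T N -> is_matroid T P -> is_matroid S Q ->
      free_product S M T N = free_product T P S Q ->
      mrank M S + mrank N T <= mrank P T + mrank Q S.
    move=> S' T' M' N' P' Q' d1 d2 hM hN hP hQ e.
    case: (hM) => _ M0 _ _.
    have [B [BM _ Bc]] := mrank_wit S' M0.
    have hk : #|B| + mrank N' T' <= mrank M' S' + mrank N' T' by rewrite Bc.
    have [A0 [A0F _ A0c]] := FP_fill d1 hM hN BM (mrank_le_card N' T') hk.
    rewrite e in A0F; have := FP_le d2 hP A0F; rewrite A0c Bc; lia.
  apply/eqP; rewrite eqn_leq (base S T M N P Q) //.
  by rewrite (base T S P Q M N) //.
exists (mrank M S + mrank N T) => A.
apply/idP/idP.
  by move=> h; case/FP_inv: (h) => // sub _ _; rewrite sub (FP_le dST HM h).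
case/andP => AST hr.
suff H : forall n (A : {set E}), #|A| <= n -> A \subset S :|: T ->
    #|A| <= mrank M S + mrank N T -> A \in free_product S M T N.
  exact: H (leqnn _) AST hr.
elim=> [|n IHn] {}A hn {}AST {}hr.
  have -> : A = set0 by apply/eqP; rewrite -cards_eq0; lia.
  rewrite inE sub0set set0I; case: HM => _ -> _ _ /=.
  by rewrite set0I /nullity cards0.
have IH : forall B : {set E}, #|B| < #|A| -> B \subset S :|: T ->
    #|B| <= mrank M S + mrank N T -> B \in free_product S M T N.
  move=> B hB; apply: IHn; lia.
case: (boolP (A :&: S \in M)) => AS; last first.
  rewrite eqF; apply: (side dTS T0 HP HQ HM HN (esym eqF)).
  - move=> B hB; rewrite setUC => hBs hBr; rewrite -eqF; apply: IH => //; lia.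
  - by rewrite setUC.
  - lia.
  - done.
case: (boolP (A :&: T \in P)) => AT; last first.
  apply: (side dST S0 HM HN HP HQ eqF) => //.
  - move=> B hB hBs hBr; apply: IH => //; lia.
  - lia.
have hk : #|A :&: S| + #|A :&: T| <= mrank M S + mrank N T by rewrite -(card_split dST AST).
have [A' [A'F A'S A'c]] := FP_fill dST HM HN AS (subset_leq_card (subsetIr A T)) hk.
rewrite eqF in A'F *.
apply: (@FP_conclude E T S P Q dTS HP A A') => //.
- by rewrite setUC.
- by rewrite A'S.
- by rewrite A'c -(card_split dST AST).
Qed.
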